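(* Let $T>0$. If $\int_{\mathbb{Q}_p^N}\|\xi\|_p^{d\beta}d\mu(\xi)<+\infty$, then \[ \lim_{h\to0^+}\int_0^T\int_{\mathbb{Q}_p^N}\sup_{|r-t|<h}\left|\mathcal{F}\Gamma(r)(\xi)-\mathcal{F}\Gamma(t)(\xi)\right|^2d\mu(\xi)\,dt=0 . \] Furthermore, the same condition implies $\int_0^Tdt\int_{\mathbb{Q}_p^N}|\mathcal{F}\Gamma(t)(\xi)|^2d\mu(\xi)<+\infty$.
   Context: $p$ prime; $\mathbb{Q}_p^N$ with $\|x\|_p=\max_i|x_i|_p$, normalized Haar measure, Fourier transform $(\mathcal{F}\varphi)(\xi)=\int\chi_p(-\xi\cdot x)\varphi(x)d^Nx$, $\chi_p(y)=\exp(2\pi i\{y\}_p)$. $a(\xi)$ is an elliptic polynomial of degree $d$ (homogeneous of degree $d$, $a(\xi)=0\iff\xi=0$), $\beta>0$, and $\Gamma(t,x)=\mathcal{F}^{-1}_{\xi\to x}(e^{-t|a(\xi)|_p^\beta})$ for $t>0$, $\Gamma(0)=\delta$, so $\mathcal{F}\Gamma(t)(\xi)=e^{-t|a(\xi)|_p^\beta}$. $\mu$ is a regular Borel measure on $\mathbb{Q}_p^N$ (the spectral measure of the noise: $\mathcal{F}\mu=f$ with $f$ nonnegative continuous on $\mathbb{Q}_p^N\setminus\{0\}$ defining a positive-definite distribution). *)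

(* Defs.v *)
From HB Require Import structures.
From mathcomp Require Import all_boot all_order all_algebra.
From mathcomp Require Import all_classical all_reals all_analysis.
From mathcomp Require mpoly.
Set Implicit Arguments. Unset Strict Implicit. Unset Printing Implicit Defensive.
Import Order.TTheory GRing.Theory Num.Theory.
Local Open Scope ring_scope.
Local Open Scope classical_set_scope.

Record is_Qp (R : realType) (p : nat) (K : fieldType) (absp : K -> R) : Prop := {
  Qp_prime : prime p;
  Qp_char0 : [pchar K] =i pred0;
  Qp_ge0 : forall x, 0 <= absp x;
  Qp_eq0 : forall x, absp x = 0 <-> x = 0;
  Qp_mul : forall x y, absp (x * y) = absp x * absp y;
  Qp_ultra : forall x y, absp (x + y) <= Num.max (absp x) (absp y);
  Qp_absp : absp p%:R = (p%:R)^-1;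
  Qp_complete : forall u : nat -> K,
     (forall e : R, 0 < e -> exists n0, forall m n, (n0 <= m)%N -> (n0 <= n)%N ->
        absp (u m - u n) < e) ->
     exists l, forall e : R, 0 < e -> exists n0, forall n, (n0 <= n)%N -> absp (u n - l) < e;
  Qp_dense : forall (x : K) (e : R), 0 < e -> exists q : rat, absp (x - ratr q) < e }.

Definition normp (R : realType) (K : fieldType) (absp : K -> R) (N : nat) (x : 'rV[K]_N) : R :=
  \big[Num.max/0]_(i < N) absp (x ord0 i).

Definition vecQp (R : realType) (K : fieldType) (absp : K -> R) (N : nat) : Type :=
  'rV[K]_N.
HB.instance Definition _ (R : realType) (K : fieldType) (absp : K -> R) (N : nat) :=
  Choice.on (vecQp absp N).
HB.instance Definition _ (R : realType) (K : fieldType) (absp : K -> R) (N : nat) :=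
  isPointed.Build (vecQp absp N) (0 : 'rV[K]_N).

Definition openp (R : realType) (K : fieldType) (absp : K -> R) (N : nat) :
    set (set (vecQp absp N)) :=
  [set U | forall x, U x -> exists2 r : R, 0 < r &
     [set y | normp absp ((y : 'rV[K]_N) - x) < r] `<=` U].

Definition QpN (R : realType) (K : fieldType) (absp : K -> R) (N : nat) :=
  g_sigma_algebraType (@openp R K absp N).

Definition poly_eval (K : fieldType) (N : nat) (a : mpoly.mpoly N K) (x : 'rV[K]_N) : K :=
  mpoly.meval (fun i => x ord0 i) a.
Definition elliptic (K : fieldType) (N d : nat) (a : mpoly.mpoly N K) : Prop :=
  a \is @mpoly.ishomog1 N K d (mpoly.mpoly_mdeg__canonical__mpoly_Measure N) /\ forall x, poly_eval a x = 0 <-> x = 0.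

(* Fourier transform of the heat kernel: (F Gamma(t))(xi) = exp(-t |a(xi)|_p^beta) *)
Definition FGamma (R : realType) (K : fieldType) (absp : K -> R) (N : nat)
    (a : mpoly.mpoly N K) (beta t : R) (xi : 'rV[K]_N) : R :=
  expR (- (t * (absp (poly_eval a xi)) `^ beta)).

(* Main.v *)
Require Import Defs.
From HB Require Import structures.
From mathcomp Require Import all_boot all_order all_algebra.
From mathcomp Require Import all_classical all_reals all_analysis.
From mathcomp Require mpoly.
From mathcomp Require Import lra ring.
From Stdlib Require Lists.List.
Import Order.TTheory GRing.Theory Num.Theory.
Local Open Scope ring_scope.
Local Open Scope classical_set_scope.

Section Alg.
Variables (R : realType) (p : nat) (K : fieldType) (absp : K -> R).
Hypothesis HQp : is_Qp p absp.

Lemma ler_sum_mem (I : Type) (r : seq I) (F G : I -> R) :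
  (forall i, Stdlib.Lists.List.In i r -> F i <= G i) -> \sum_(i <- r) F i <= \sum_(i <- r) G i.
Proof.
elim: r => [|y r IH] H; first by rewrite !big_nil.
rewrite !big_cons; apply: lerD; first by apply: H; left.
by apply: IH => i ir; apply: H; right.
Qed.

Lemma all_In (I : Type) (P : pred I) (r : seq I) i : all P r -> Stdlib.Lists.List.In i r -> P i.
Proof.
elim: r => [|y r IH] //= /andP[Py Pr] [<-|ir] //; exact: IH.
Qed.

Arguments all_In {I P r i}.

Lemma absp0 : absp 0 = 0.
Proof. by apply/(Qp_eq0 HQp). Qed.

Lemma absp1 : absp 1 = 1.
Proof.
have h := Qp_mul HQp 1 1; rewrite mulr1 in h.
have n0 : absp 1 != 0 by apply/eqP => /(Qp_eq0 HQp)/eqP; rewrite oner_eq0.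
by apply: (mulfI n0); rewrite -h mulr1.
Qed.

Lemma abspD x y : absp (x + y) <= absp x + absp y.
Proof.
apply: le_trans (Qp_ultra HQp x y) _.
rewrite ge_max; apply/andP; split.
  by rewrite lerDl (Qp_ge0 HQp).
by rewrite lerDr (Qp_ge0 HQp).
Qed.

Lemma absp_sum (I : Type) (s : seq I) (F : I -> K) :
  absp (\sum_(i <- s) F i) <= \sum_(i <- s) absp (F i).
Proof.
elim: s => [|x s IH]; first by rewrite !big_nil absp0.
rewrite !big_cons; apply: le_trans (abspD _ _) _; exact: lerD.
Qed.

Lemma absp_prod (I : Type) (s : seq I) (F : I -> K) :
  absp (\prod_(i <- s) F i) = \prod_(i <- s) absp (F i).
Proof.
elim: s => [|x s IH]; first by rewrite !big_nil absp1.
by rewrite !big_cons (Qp_mul HQp) IH.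
Qed.

Lemma abspX x n : absp (x ^+ n) = absp x ^+ n.
Proof.
elim: n => [|n IH]; first by rewrite !expr0 absp1.
by rewrite !exprS (Qp_mul HQp) IH.
Qed.

Lemma normp_ge0 N (x : 'rV[K]_N) : 0 <= normp absp x.
Proof.
rewrite /normp; elim/big_ind: _ => //.
  by move=> u v u0 v0; rewrite le_max u0.
by move=> i _; exact: (Qp_ge0 HQp).
Qed.

Lemma absp_le_normp N (x : 'rV[K]_N) i : absp (x ord0 i) <= normp absp x.
Proof. by rewrite /normp; apply: le_bigmax. Qed.

Lemma normp_ultra N (x y : 'rV[K]_N) :
  normp absp (x + y) <= Num.max (normp absp x) (normp absp y).
Proof.
rewrite {1}/normp; apply: bigmax_le.
  by rewrite le_max normp_ge0.
move=> i _; rewrite mxE; apply: le_trans (Qp_ultra HQp _ _) _.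
rewrite ge_max !le_max !absp_le_normp ?orbT //.
Qed.

Lemma poly_bound N d (a : mpoly.mpoly N K) :
  a \is @mpoly.ishomog1 N K d (mpoly.mpoly_mdeg__canonical__mpoly_Measure N) ->
  exists C : R, 0 <= C /\ forall x, absp (poly_eval a x) <= C * normp absp x ^+ d.
Proof.
move=> hom.
exists (\sum_(m <- mpoly.msupp a) absp (mpoly.mcoeff m a)); split.
  by apply: sumr_ge0 => i _; exact: (Qp_ge0 HQp).
move=> x.
have E : poly_eval a x = \sum_(m <- mpoly.msupp a)
    mpoly.mcoeff m a * \prod_i x ord0 i ^+ mpoly.fun_of_multinom m i.
  by rewrite /poly_eval mpoly.mevalE.
rewrite E. rewrite [X in _ <= X]mulr_suml. apply: (le_trans (absp_sum _ _ _)).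
apply: ler_sum_mem => m mm.
rewrite (Qp_mul HQp) ler_wpM2l ?(Qp_ge0 HQp)//.
rewrite absp_prod.
have -> : d = mpoly.mdeg m.
  move: hom; rewrite qualifE /= => hom; by have /eqP <- := all_In hom mm.
rewrite mpoly.mdegE -prodrXr; apply: ler_prod => i _.
rewrite abspX; apply/andP; split; first by rewrite exprn_ge0 ?(Qp_ge0 HQp).
by rewrite lerXn2r ?absp_le_normp ?nnegrE ?(Qp_ge0 HQp) ?normp_ge0.
Qed.
End Alg.

Lemma lim_lin (R : realType) (M : R) :
  ((fun h : R => (h * M)%:E) @ 0%R^'+ --> (0%R)%:E)%E.
Proof.
apply: cvg_at_right_filter.
apply: cvg_EFin; first by near=> h.
have -> : (fine \o (fun h : R => (h * M)%:E)) = (fun h => h * M) by [].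
have := @cvgMr_tmp R R (nbhs 0) _ id 0 M cvg_id.
rewrite mul0r; apply; exact: nbhs_filter.
Unshelve. all: end_near.
Qed.

Lemma expR_diff (R : realType) (x y : R) : 0 <= x -> 0 <= y ->
  `|expR (- x) - expR (- y)| <= `|x - y| /\ `|expR (- x) - expR (- y)| <= 1.
Proof.
wlog xy : x y / x <= y.
  move=> H x0 y0; have [/H //|/ltW yx] := leP x y; first exact.
  by rewrite distrC [`|x - y|]distrC; exact: H.
move=> x0 y0.
have e1 : expR (- y) <= expR (- x) by rewrite ler_expR lerN2.
rewrite ger0_norm ?subr_ge0// ler0_norm ?subr_le0//.
split; last first.
  apply: le_trans (_ : expR (- x) <= 1).
    by rewrite lerBlDr lerDl expR_ge0.
  by rewrite expR_le1 oppr_le0.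
have : 1 + (x - y) <= expR (x - y) := expR_ge1Dx _.
have ex1 : expR (- x) <= 1 by rewrite expR_le1 oppr_le0.
have -> : expR (- y) = expR (- x) * expR (x - y).
  by rewrite -expRD; congr expR; ring.
move=> H.
have : expR (- x) * (1 - expR (x - y)) <= 1 * (y - x).
  apply: ler_pM; rewrite ?expR_ge0 //; last by lra.
  by rewrite subr_ge0 expR_le1 subr_le0.
lra.
Qed.

Arguments normp_ultra {R p K absp} HQp {N}.
Arguments normp_ge0 {R p K absp} HQp {N}.

Lemma ball1_measurable (R : realType) (p : nat) (K : fieldType) (absp : K -> R)
    (HQp : is_Qp p absp) (N : nat) :
  measurable [set xi : QpN absp N | normp absp xi <= 1].
Proof.
apply: sub_sigma_algebra => x Bx; exists 1 => // y /= hy.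
have := normp_ultra HQp ((y : 'rV[K]_N) - x) x; rewrite subrK => H.
apply: le_trans H _; rewrite ge_max (ltW hy) /=; exact: Bx.
Qed.

Local Open Scope ereal_scope.

Section IntAux.
Context d (T : measurableType d) (R : realType).
Variable mu : {measure set T -> \bar R}.
Import HBNNSimple.

Lemma le_int_nm (D : set T) (f g : T -> \bar R) :
  (forall x, D x -> 0 <= f x) -> (forall x, D x -> f x <= g x) ->
  \int[mu]_(x in D) f x <= \int[mu]_(x in D) g x.
Proof.
move=> f0 fg.
have g0 : forall x, D x -> 0 <= g x by move=> x Dx; exact: le_trans (f0 _ Dx) (fg _ Dx).
rewrite (ge0_integralE _ f0) (ge0_integralE _ g0).
apply: le_ereal_sup => _ [h hf <-]; exists h => // x.
apply: le_trans (hf x) _; rewrite /patch; case: ifP => // /[1!inE] Dx; exact: fg.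
Qed.

Lemma le_intZ_nm (D : set T) (f : T -> \bar R) (c : R) : (0 < c)%R ->
  (forall x, D x -> 0 <= f x) ->
  \int[mu]_(x in D) (c%:E * f x) <= c%:E * \int[mu]_(x in D) f x.
Proof.
move=> c0 f0.
have cf0 : forall x, D x -> 0 <= c%:E * f x.
  by move=> x Dx; apply: mule_ge0; [rewrite lee_fin ltW | exact: f0].
rewrite (ge0_integralE _ f0) (ge0_integralE _ cf0).
apply: ge_ereal_sup => _ [h hf <-].
have ci0 : (0 <= c^-1)%R by rewrite invr_ge0 ltW.
pose h' := scale_nnsfun h ci0.
have -> : sintegral mu h = c%:E * sintegral mu h'.
  rewrite /h' /scale_nnsfun.
  have -> : sintegral mu (mul_nnsfun (cst_nnsfun T (NngNum ci0)) h) =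
     sintegral mu (cst c^-1 \* h)%R by [].
  by rewrite sintegralrM muleA -EFinM mulfV ?gt_eqF// mul1e.
rewrite lee_pmul2l ?lte_fin//.
apply: ereal_sup_ubound; exists h' => // x.
have := hf x; rewrite /patch /=; case: ifP => _ hx.
  have -> : f x = (c^-1)%:E * (c%:E * f x).
    by rewrite muleA -EFinM mulVf ?lt0r_neq0// mul1e.
  rewrite /= EFinM lee_pmul2l ?lte_fin ?invr_gt0//.
have hx0 : (h x <= 0)%R by rewrite -lee_fin.
by rewrite /= lee_fin mulr_ge0_le0// invr_ge0 ltW.
Qed.
End IntAux.

Arguments le_int_nm {d T R} mu {D f g}.
Arguments le_intZ_nm {d T R} mu {D f} c.

Theorem lemma6 (R : realType) (p : nat) (K : fieldType) (absp : K -> R)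
    (HQp : is_Qp p absp) (N d : nat) (HN : (0 < N)%N)
    (a : mpoly.mpoly N K) (Ha : elliptic d a)
    (beta : R) (Hbeta : (0 < beta)%R)
    (mu : {measure set (QpN absp N) -> \bar R})
    (Hmu_locfin : forall r : R, mu [set xi | (normp absp xi <= r)%R] < +oo)
    (T : R) (HT : (0 < T)%R) :
  \int[mu]_xi ((normp absp xi) `^ (d%:R * beta))%:E < +oo ->
  ((fun h : R =>
      \int[lebesgue_measure]_(t in `[0%R, T])
        \int[mu]_xi
          ereal_sup [set ((`|FGamma absp a beta r xi - FGamma absp a beta t xi|) ^+ 2)%:E
                    | r in [set r : R | (0 <= r)%R /\ (`|r - t| < h)%R]])
     @ 0%R^'+ --> 0)
  /\
  \int[lebesgue_measure]_(t in `[0%R, T])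
     \int[mu]_xi ((`|FGamma absp a beta t xi|) ^+ 2)%:E < +oo.
Proof.
move=> HI.
have [C [C0 HC]] := @poly_bound _ _ _ _ HQp _ _ _ Ha.1.
pose D := (C `^ beta + 1)%R.
have D0 : (0 < D)%R by rewrite /D ltr_pwDr ?powR_ge0.
have HA : forall xi : QpN absp N, (absp (poly_eval a xi) `^ beta <=
    D * normp absp xi `^ (d%:R * beta))%R.
  move=> xi.
  have n0 := normp_ge0 HQp xi.
  have h1 : (absp (poly_eval a xi) `^ beta <= (C * normp absp xi ^+ d) `^ beta)%R.
    apply: ge0_ler_powR; rewrite ?nnegrE ?(ltW Hbeta) ?(Qp_ge0 HQp) ?mulr_ge0 ?exprn_ge0//.
  rewrite powRM ?exprn_ge0// -powR_mulrn// -powRrM in h1.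
  apply: le_trans h1 _; apply: ler_wpM2r; first exact: powR_ge0.
  by rewrite /D lerDl.
pose I := \int[mu]_xi ((normp absp xi) `^ (d%:R * beta))%:E.
have I0 : 0 <= I by apply: integral_ge0 => xi _; rewrite lee_fin powR_ge0.
have IF : I \is a fin_num by rewrite ge0_fin_numE.
have FG0 : forall t xi, (0 <= t)%R -> (0 <= FGamma absp a beta t xi <= 1)%R.
  move=> t xi t0; rewrite /FGamma expR_ge0 expR_le1 oppr_le0 /=.
  by rewrite mulr_ge0 ?powR_ge0.
split.
  pose M := (D * fine I * T)%R.
  apply: (@squeeze_cvge _ _ _ R (cst 0) _ (fun h => (h * M)%:E)); last 2 first.
  - exact: cvg_cst.
  - exact: lim_lin.
  near=> h.
  have h0 : (0 < h)%R by near: h; exact: nbhs_right_gt.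
  have sup0 : forall t xi, (0 <= t)%R -> 0 <=
      ereal_sup [set ((`|FGamma absp a beta r xi - FGamma absp a beta t xi|) ^+ 2)%:E
                    | r in [set r : R | (0 <= r)%R /\ (`|r - t| < h)%R]].
    move=> t xi t0; apply: le_trans (ereal_sup_ubound _); last first.
      by exists t => //; split => //; rewrite subrr normr0.
    by rewrite subrr normr0 expr0n.
  have inner : forall t, (0 <= t)%R -> \int[mu]_xi
      ereal_sup [set ((`|FGamma absp a beta r xi - FGamma absp a beta t xi|) ^+ 2)%:E
                    | r in [set r : R | (0 <= r)%R /\ (`|r - t| < h)%R]]
      <= (h * D)%:E * I.
    move=> t t0.
    apply: (le_trans _ (le_intZ_nm mu (h * D) _ _)); last 2 first.
    - by rewrite mulr_gt0.
    - by move=> xi _; rewrite lee_fin powR_ge0.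
    apply: le_int_nm => xi _; first exact: sup0.
    apply: ge_ereal_sup => _ [r [r0 hr] <-].
    rewrite -EFinM lee_fin.
    have [e1 e2] := @expR_diff _ _ _ (mulr_ge0 r0 (powR_ge0 (absp (poly_eval a xi)) beta))
                              (mulr_ge0 t0 (powR_ge0 (absp (poly_eval a xi)) beta)).
    rewrite /FGamma.
    set u := (`|_ - _|)%R.
    have u0 : (0 <= u)%R by exact: normr_ge0.
    apply: (@le_trans _ _ u).
      by rewrite expr2 -[X in (_ <= X)%R]mulr1 ler_wpM2l.
    apply: le_trans e1 _.
    rewrite -mulrBl normrM (ger0_norm (powR_ge0 _ _)) -mulrA.
    apply: ler_pM; [exact: normr_ge0 | exact: powR_ge0 | exact: ltW | ].
    exact: HA.
  apply/andP; split.
    apply: integral_ge0 => t /=; rewrite in_itv /= => /andP[t0 _].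
    by apply: integral_ge0 => xi _; exact: sup0.
  apply: le_trans (le_int_nm _ (g := cst ((h * D)%:E * I)) _ _) _.
  - move=> t /=; rewrite in_itv /= => /andP[t0 _].
    by apply: integral_ge0 => xi _; exact: sup0.
  - move=> t /=; rewrite in_itv /= => /andP[t0 _]; exact: inner.
  rewrite integral_cst; last exact: measurable_itv.
  have L := lebesgue_measure_itv (Interval (BLeft 0%R) (BRight T)).
  rewrite /= lte_fin HT sube0 in L.
  set X := (X in _ * X <= _).
  have -> : X = T%:E by exact: L.
  rewrite -(fineK IF) -!EFinM lee_fin.
  by rewrite /M !mulrA.
pose B := [set xi : QpN absp N | (normp absp xi <= 1)%R].
have mB : measurable B := @ball1_measurable _ _ _ _ HQp N.
have muC : mu (~` B) <= I.
  rewrite -(setIT (~` B)) -integral_indic//; last exact: measurableC.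
  apply: le_int_nm => xi _; first by rewrite lee_fin.
  rewrite indicE lee_fin; case: (boolP (xi \in ~` B)) => /= [|_]; last exact: powR_ge0.
  rewrite inE /B /= => /negP; rewrite -ltNge => n1.
  rewrite -(powRr0 (normp absp xi)); apply: ler_powR; first exact: ltW.
  by rewrite mulr_ge0 ?mulrn_wge0 ?powR_ge0 ?ltW.
have muT : mu setT < +oo.
  rewrite -(setUCr B); apply: le_lt_trans (measureU2 _ _ _) _ => //; first exact: measurableC.
  rewrite lte_add_pinfty //; first exact: Hmu_locfin.
  by apply: le_lt_trans muC _.
have muF : mu setT \is a fin_num by rewrite ge0_fin_numE.
apply: le_lt_trans (le_int_nm _ (g := cst (mu setT)) _ _) _.
- move=> t _; apply: integral_ge0 => xi _; by rewrite lee_fin.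
- move=> t /=; rewrite in_itv /= => /andP[t0 _].
  apply: le_trans (le_int_nm _ (g := cst 1) _ _) _.
  + by move=> xi _; rewrite lee_fin.
  + move=> xi _ /=; rewrite lee_fin.
    have /andP[g0 g1] := FG0 t xi t0.
    by rewrite ger0_norm // exprn_ile1.
  by rewrite integral_cst // mul1e.
rewrite integral_cst; last exact: measurable_itv.
have L := lebesgue_measure_itv (Interval (BLeft 0%R) (BRight T)).
rewrite /= lte_fin HT sube0 in L.
set X := (X in _ * X < _).
have -> : X = T%:E by exact: L.
rewrite -(fineK muF) -EFinM.
exact: ltry.
Unshelve. all: end_near.
Qed.
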